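(* Let $G$ be a countable group, let $\mathcal{L}:G\to[0,\infty)$ be subadditive (i.e.\ $\mathcal{L}(st)\le\mathcal{L}(s)+\mathcal{L}(t)$ for all $s,t\in G$), and let $\mu$ be a probability measure on $G$ with $\sum_{s\in G}\mu(s)\log(1+\mathcal{L}(s))<\infty$. Then \[ \mathrm{Ly}_{1+\mathcal{L}}(G,\mu)=\lim_{n\to\infty}\frac1n\sum_{s\in G}\mu^{*n}(s)\log(1+\mathcal{L}(s))=0. \]
   Context: $\mu^{*n}$ denotes the $n$-fold convolution power of $\mu$, where $\mu*\nu(s)=\sum_t\mu(t)\nu(t^{-1}s)$. *)

(* Defs.v *)
From mathcomp Require Import all_boot all_order all_algebra.
From mathcomp Require Import all_classical all_reals all_analysis.
Set Implicit Arguments. Unset Strict Implicit. Unset Printing Implicit Defensive.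
Import Order.TTheory GRing.Theory Num.Theory.
Local Open Scope classical_set_scope.
Local Open Scope ring_scope.

Definition is_group (G : Type) (mul : G -> G -> G) (inv : G -> G) (e : G) : Prop :=
  [/\ forall x y z, mul x (mul y z) = mul (mul x y) z,
      forall x, mul e x = x,
      forall x, mul x e = x,
      forall x, mul (inv x) x = e &
      forall x, mul x (inv x) = e].

Definition is_prob {R : realType} (G : choiceType) (mu : G -> R) : Prop :=
  (forall s, 0 <= mu s) /\ (\esum_(s in [set: G]) (mu s)%:E = 1)%E.

(* Convolution  (mu * nu)(s) = sum_t mu(t) nu(t^{-1} s)  (nonnegative terms;
   for probability measures the sum is finite, so [fine] is harmless). *)
Definition conv {R : realType} (G : choiceType) (mul : G -> G -> G) (inv : G -> G)
  (mu nu : G -> R) : G -> R :=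
  fun s => fine (\esum_(t in [set: G]) (mu t * nu (mul (inv t) s))%:E).

Fixpoint convpow {R : realType} (G : choiceType) (mul : G -> G -> G) (inv : G -> G)
  (e : G) (mu : G -> R) (n : nat) : G -> R :=
  match n with
  | 0 => fun s => if s == e then 1 else 0
  | n'.+1 => conv mul inv (convpow mul inv e mu n') mu
  end.

(* Main.v *)
Require Import Defs.
From mathcomp Require Import all_boot all_order all_algebra.
From mathcomp Require Import all_classical all_reals all_analysis.
From mathcomp Require Import ring lra finmap.
Import Order.TTheory GRing.Theory Num.Theory.
Local Open Scope classical_set_scope.
Local Open Scope ring_scope.

Lemma esumZl (R : realType) (T : choiceType) (I : set T) (r : R) (a : T -> \bar R) :
  0 <= r -> (forall i, 0 <= a i)%E ->
  (\esum_(i in I) (r%:E * a i) = r%:E * \esum_(i in I) a i)%E.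
Proof.
move=> r0 a0; rewrite /esum -ereal_supZl//; last first.
  by apply/set0P; exists 0%E; exists set0; [exact: fsets_set0|rewrite fsbig_set0].
congr ereal_sup; apply/seteqP; split => x /=.
  by move=> [X XI <-]; exists (\sum_(i \in X) a i)%E; [exists X|rewrite ge0_mule_fsumr].
by move=> [_ [X XI <-] <-]; exists X => //; rewrite ge0_mule_fsumr.
Qed.

Lemma bijT (A B : Type) (f : A -> B) (g : B -> A) :
  cancel f g -> cancel g f -> set_bij [set: A] [set: B] f.
Proof.
move=> fg gf; split.
- by move=> x.
- by move=> x y _ _ /(can_inj fg).
- by move=> y _; exists (g y).
Qed.

Lemma esum_swap (R : realType) (T1 T2 : choiceType) (a : T1 -> T2 -> \bar R) :
  (forall i j, 0 <= a i j)%E ->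
  (\esum_(i in [set: T1]) \esum_(j in [set: T2]) a i j =
   \esum_(j in [set: T2]) \esum_(i in [set: T1]) a i j)%E.
Proof.
move=> a0; rewrite !esum_esum //.
rewrite (@reindex_esum R _ _ ([set: T2] `*`` (fun _ => [set: T1]))
   ([set: T1] `*`` (fun _ => [set: T2])) (fun z => (z.2, z.1))) //.
split.
- by move=> z.
- by move=> [x y] [x' y'] _ _ /= [-> ->].
- by move=> [x y] _; exists (y, x).
Qed.

Section Conv.
Variables (R : realType) (G : countType) (mul : G -> G -> G) (inv : G -> G) (e : G).
Hypothesis hG : is_group mul inv e.
Variable mu : G -> R.
Hypothesis hmu : is_prob mu.

Lemma mulK t u : mul (inv t) (mul t u) = u.
Proof. by case: hG => A B _ D _; rewrite A D B. Qed.
Lemma mulKV t s : mul t (mul (inv t) s) = s.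
Proof. by case: hG => A B _ _ E; rewrite A E B. Qed.

Lemma mu_le1 u : mu u <= 1.
Proof.
rewrite -lee_fin -hmu.2; apply: esum_ge; exists [set u].
  by split; [exact: finite_set1|].
by rewrite fsbig_set1.
Qed.

Lemma conv_unfold (q : G -> R) (hq0 : forall t, 0 <= q t)
  (hq1 : (\esum_(t in [set: G]) (q t)%:E = 1)%E) (F : G -> R) (hF : forall s, 0 <= F s) :
  (\esum_(s in [set: G]) (Defs.conv mul inv q mu s * F s)%:E =
   \esum_(t in [set: G]) (q t)%:E * \esum_(u in [set: G]) (mu u * F (mul t u))%:E)%E.
Proof.
have mu0 := hmu.1.
have hc s : (Defs.conv mul inv q mu s)%:E =
    (\esum_(t in [set: G]) (q t * mu (mul (inv t) s))%:E)%E.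
  rewrite /Defs.conv fineK // ge0_fin_numE; last by apply: esum_ge0 => t _; rewrite lee_fin mulr_ge0.
  apply: (@le_lt_trans _ _ 1%E); last by rewrite ltry.
  rewrite -hq1; apply: le_esum => t _; rewrite lee_fin.
  by rewrite -[leRHS]mulr1 ler_wpM2l // mu_le1.
transitivity (\esum_(s in [set: G]) \esum_(t in [set: G])
    (q t * mu (mul (inv t) s) * F s)%:E)%E.
  apply: eq_esum => s _; rewrite EFinM hc muleC -esumZl //; last first.
    by move=> t; rewrite lee_fin mulr_ge0.
  by apply: eq_esum => t _; rewrite -EFinM mulrC.
rewrite esum_swap; last by move=> s t; rewrite lee_fin !mulr_ge0.
apply: eq_esum => t _.
rewrite -esumZl //; last by move=> u; rewrite lee_fin mulr_ge0.
rewrite [LHS](@reindex_esum R _ _ [set: G] [set: G] (mul t)); last first.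
  by apply: (@bijT _ _ _ (mul (inv t))) => x; [exact: mulK|exact: mulKV].
by apply: eq_esum => u _; rewrite mulK -EFinM mulrA.
Qed.


Lemma convpow_prob n : (forall s, 0 <= convpow mul inv e mu n s) /\
  (\esum_(s in [set: G]) (convpow mul inv e mu n s)%:E = 1)%E.
Proof.
elim: n => [|n [IH0 IH1]] /=.
  split; first by move=> s; case: ifP.
  rewrite (esumID [set e]); last by move=> s _; case: ifP.
  rewrite setTI esum_set1 ?eqxx ?lee_fin // esum1 ?adde0 // => s [_ /= /eqP hs].
  by rewrite ifN.
split.
  by move=> s; apply: fine_ge0; apply: esum_ge0 => t _; rewrite lee_fin mulr_ge0 // hmu.1.
transitivity (\esum_(s in [set: G]) (Defs.conv mul inv (convpow mul inv e mu n) mu s * 1)%:E)%E.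
  by apply: eq_esum => s _; rewrite mulr1.
rewrite (@conv_unfold _ IH0 IH1 (fun _ => 1) (fun _ => ler01)).
rewrite -[RHS]IH1; apply: eq_esum => t _.
transitivity ((convpow mul inv e mu n t)%:E * 1)%E; last by rewrite mule1.
congr (_ * _)%E; rewrite -hmu.2; apply: eq_esum => u _; by rewrite mulr1.
Qed.



Variable L : G -> R.
Hypothesis hL0 : forall s, 0 <= L s.
Hypothesis hLsub : forall s t, L (mul s t) <= L s + L t.

Lemma lnle (x y : R) : 0 < x -> x <= y -> ln x <= ln y.
Proof. by move=> x0 xy; rewrite ler_ln // posrE (lt_le_trans x0 xy). Qed.

Lemma key (S : set G) (M : R) (hM0 : 0 <= M) (hSM : forall u, u \in S -> L u <= M) t u c :
  0 <= c ->
  ln (1 + c + L (mul t u)) <= ln (1 + (c + M) + L t) + (if u \in S then 0 else ln (1 + L u)).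
Proof.
move=> c0; have Lt := hL0 t; have Lu := hL0 u.
have h1 : ln (1 + c + L (mul t u)) <= ln (1 + c + L t + L u).
  apply: lnle; first by have := hL0 (mul t u); lra.
  by have := hLsub t u; lra.
apply: (le_trans h1); case: ifP => uS.
  rewrite addr0; apply: lnle; first by lra.
  by have := hSM u uS; lra.
rewrite -lnM ?posrE; [|lra|lra].
apply: lnle; first lra.
nra.
Qed.



Lemma main_bound (S : set G) (M eps : R) (hM0 : 0 <= M)
  (hSM : forall u, u \in S -> L u <= M)
  (heps : (\esum_(u in [set: G]) (mu u * (if u \in S then 0 else ln (1 + L u)))%:E <= eps%:E)%E)
  n c : 0 <= c ->
  (\esum_(s in [set: G]) (convpow mul inv e mu n s * ln (1 + c + L s))%:E <=
    (ln (1 + c + L e + n%:R * M) + n%:R * eps)%:E)%E.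
Proof.
have mu0 := hmu.1.
have g0 u : 0 <= (if u \in S then 0 else ln (1 + L u)).
  by case: ifP => // _; apply: ln_ge0; have := hL0 u; lra.
have eps0 : 0 <= eps.
  rewrite -lee_fin; apply: le_trans heps; apply: esum_ge0 => u _.
  by rewrite lee_fin mulr_ge0.
have F0 c' s : 0 <= c' -> 0 <= ln (1 + c' + L s).
  by move=> c0; apply: ln_ge0; have := hL0 s; lra.
elim: n c => [|n IH] c c0 /=.
  rewrite (esumID [set e]); last by move=> s _; case: ifP => _; rewrite lee_fin ?mul1r ?mul0r // F0.
  rewrite setTI esum_set1 ?eqxx ?mul1r ?lee_fin ?F0 //.
  rewrite esum1 ?adde0; last by move=> s [_ /= /eqP hs]; rewrite ifN ?mul0r.
  by rewrite !mul0r !addr0.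
have [P0 P1] := convpow_prob n.
rewrite (@conv_unfold _ P0 P1 (fun s => ln (1 + c + L s))); last by move=> s; exact: F0.
apply: (@le_trans _ _ (\esum_(t in [set: G])
   ((convpow mul inv e mu n t * ln (1 + (c + M) + L t))%:E +
    (convpow mul inv e mu n t * eps)%:E))%E).
  apply: le_esum => t _; rewrite -EFinD -mulrDr EFinM.
  apply: lee_wpmul2l; first by rewrite lee_fin.
  apply: (@le_trans _ _ (\esum_(u in [set: G])
     ((mu u * ln (1 + (c + M) + L t))%:E +
      (mu u * (if u \in S then 0 else ln (1 + L u)))%:E))%E).
    apply: le_esum => u _; rewrite -EFinD -mulrDr lee_fin ler_wpM2l //.
    exact: key.
  rewrite esumD; last 2 first.
  - by move=> u _; rewrite lee_fin mulr_ge0 // F0 // addr_ge0.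
  - by move=> u _; rewrite lee_fin mulr_ge0.
  rewrite EFinD leeD //.
  under eq_esum do rewrite mulrC EFinM.
  by rewrite esumZl ?hmu.2 ?mule1 // ?F0 ?addr_ge0 // => u; rewrite lee_fin.
rewrite esumD; last 2 first.
- by move=> t _; rewrite lee_fin mulr_ge0 // F0 // addr_ge0.
- by move=> t _; rewrite lee_fin mulr_ge0.
under [X in (_ + X)%E]eq_esum do rewrite mulrC EFinM.
rewrite (@esumZl _ _ _ eps _ eps0); last by move=> t; rewrite lee_fin.
rewrite P1 mule1.
apply: (@le_trans _ _ ((ln (1 + (c + M) + L e + n%:R * M) + n%:R * eps)%:E + eps%:E)%E).
  by rewrite leeD // IH // addr_ge0.
rewrite -EFinD lee_fin -addn1 natrD.
have -> : 1 + (c + M) + L e + n%:R * M = 1 + c + L e + (n%:R + 1) * M by ring.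
lra.
Qed.

End Conv.
Lemma aux_lin (R : realFieldType) (y B b x : R) :
  y < B + x / 4 + x / 4 -> B <= b -> 0 <= b -> 4 * b < x -> y <= x.
Proof. lra. Qed.

Lemma final_real (R : realType) (C : R) (hC : 1 <= C) (y : nat -> R) (y0 : forall n, 0 <= y n)
 (hb : forall d, 0 < d -> exists M, 0 <= M /\ forall n, y n <= ln (C + n%:R * M) + n%:R * d) :
 (fun n => n%:R^-1 * y n) @ \oo --> 0.
Proof.
suff H : forall d : R, 0 < d -> \forall n \near \oo, `|0 - n%:R^-1 * y n| <= d.
  by apply/cvgrPdist_le => d d0; exact: H.
move=> d d0.
have d40 : 0 < d / 4 by rewrite divr_gt0.
have [M [M0 hy]] := hb _ d40.
set K := 4 * (M + 1) / d.
have K0 : 0 < K by rewrite /K divr_gt0 // mulr_gt0 //; lra.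
set B := C / K + ln K.
have B4 : 0 <= 4 * `|B| / d by apply: divr_ge0; [apply: mulr_ge0 => //; exact: normr_ge0|exact: ltW].
exists (Num.bound (4 * `|B| / d)).+1 => // n /= hn.
have n0 : (0 < n)%N by apply: leq_trans hn.
have n0' : 0 < n%:R :> R by rewrite ltr0n.
rewrite sub0r normrN ger0_norm; last by rewrite mulr_ge0 // invr_ge0 ler0n.
rewrite ler_pdivrMl //.
have hnB : 4 * `|B| / d < n%:R.
  apply: (lt_le_trans (archi_boundP B4)); rewrite ler_nat; exact: ltnW.
have hnB' : 4 * `|B| < n%:R * d by rewrite -ltr_pdivrMr.
have MK : M / K <= d / 4.
  rewrite ler_pdivrMr // /K.
  have -> : d / 4 * (4 * (M + 1) / d) = M + 1 by field; lra.
  lra.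
have nMK : n%:R * (M / K) <= n%:R * (d / 4) by rewrite ler_wpM2l // ler0n.
have CM0 : 0 < C + n%:R * M by have := mulr_ge0 (ler0n R n) M0; lra.
have e1 : ln (C + n%:R * M) = ln ((C + n%:R * M) / K) + ln K.
  rewrite -lnM; [by rewrite divfK // gt_eqF | by rewrite posrE divr_gt0 | by rewrite posrE].
have e2 : ln ((C + n%:R * M) / K) < (C + n%:R * M) / K.
  by apply: ln_sublinear; rewrite divr_gt0.
have e3 : (C + n%:R * M) / K = C / K + n%:R * (M / K) by rewrite mulrDl mulrA.
have hBB : B <= `|B| := ler_norm B.
have e4 : n%:R * (d / 4) = (n%:R * d) / 4 by rewrite mulrA.
have hB : B = C / K + ln K by [].
have s1 : ln (C + n%:R * M) < C / K + n%:R * (M / K) + ln K.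
  by rewrite e1 -e3 ltrD2r.
have s2 : y n < B + n%:R * (d / 4) + n%:R * (d / 4).
  rewrite hB; apply: (le_lt_trans (hy n)). rewrite ltrD2r. 
  apply: (lt_le_trans s1). rewrite -addrA (addrC (n%:R * _)) addrA lerD2l. done.
rewrite e4 in s2; clearbody B; 
exact: aux_lin s2 hBB (normr_ge0 _) hnB'.
Qed.
Lemma aux_ereal (R : realType) (A B : \bar R) (t d : R) : (0 <= A)%E -> (0 <= B)%E ->
  (A + B = t%:E)%E -> ((t - d)%:E < A)%E -> (B <= d%:E)%E.
Proof.
case: A => [a||] //; case: B => [b||] //=.
rewrite !lee_fin lte_fin => a0 b0 [hab] hta; lra.
Qed.
Lemma leM (R : realType) (T : choiceType) (X : seq T) (L : T -> R) (hL : forall s, 0 <= L s) u :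
  uniq X -> u \in X -> L u <= \sum_(x <- X) L x.
Proof.
move=> uX uin; rewrite (bigD1_seq u) //= lerDl sumr_ge0 //.
Qed.

Theorem theorem3p6 (R : realType) (G : countType)
  (mul : G -> G -> G) (inv : G -> G) (e : G)
  (hG : is_group mul inv e)
  (L : G -> R) (hL0 : forall s, 0 <= L s)
  (hLsub : forall s t, L (mul s t) <= L s + L t)
  (mu : G -> R) (hmu : is_prob mu)
  (hmom : (\esum_(s in [set: G]) (mu s * ln (1 + L s))%:E < +oo)%E) :
  ((fun n : nat => (n%:R^-1)%:E *
      \esum_(s in [set: G]) (convpow mul inv e mu n s * ln (1 + L s))%:E)%E
     @ \oo --> 0%E).
Proof.
have mu0 := hmu.1.
have h0 s : 0 <= ln (1 + L s) by apply: ln_ge0; have := hL0 s; lra.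
set T0 := (\esum_(s in [set: G]) (mu s * ln (1 + L s))%:E)%E in hmom.
have T00 : (0 <= T0)%E by apply: esum_ge0 => s _; rewrite lee_fin mulr_ge0.
have hT : T0 = (fine T0)%:E by rewrite fineK // ge0_fin_numE.
set t := fine T0 in hT.
set E := fun n => (\esum_(s in [set: G]) (convpow mul inv e mu n s * ln (1 + L s))%:E)%E.
have mb (S : set G) (M eps : R) (hM0 : 0 <= M) (hSM : forall u, u \in S -> L u <= M)
  (heps : (\esum_(u in [set: G]) (mu u * (if u \in S then 0 else ln (1 + L u)))%:E <= eps%:E)%E) n :
  (E n <= (ln (1 + L e + n%:R * M) + n%:R * eps)%:E)%E.
  have := @main_bound R G mul inv e hG mu hmu L hL0 hLsub S M eps hM0 hSM heps n 0 (lexx 0).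
  by rewrite !addr0.
have E0 n : (0 <= E n)%E.
  apply: esum_ge0 => s _; rewrite lee_fin mulr_ge0 //.
  by have [P0 _] := @convpow_prob R G mul inv e hG mu hmu n; exact: P0.
have Efin n : E n = (fine (E n))%:E.
  rewrite fineK // ge0_fin_numE //.
  apply: (le_lt_trans (mb set0 0 t (lexx 0) _ _ n)); last by rewrite ltry.
    by move=> u; rewrite in_set0.
  rewrite -hT le_eqVlt; apply/orP; left; apply/eqP; apply: eq_esum => u _.
  by rewrite in_set0.
set y := fun n => fine (E n).
have -> : (fun n : nat => (n%:R^-1)%:E * E n)%E = (fun n => (n%:R^-1 * y n)%:E).
  by apply: funext => n; rewrite Efin.
apply: cvg_EFin; first by apply: nearW.
apply: (@final_real R (1 + L e)); first by have := hL0 e; lra.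
  by move=> n; apply: fine_ge0.
move=> d d0.
have : ((t - d)%:E < T0)%E by rewrite hT lte_fin; lra.
rewrite {1}/T0 /esum => /ereal_sup_gt [_ [X [finX _] <-]] hX.
exists (\sum_(x <- (fset_set X : seq G)) L x); split; first by rewrite sumr_ge0.
move=> n; rewrite -lee_fin -Efin; apply: (mb X).
- by rewrite sumr_ge0.
- by move=> u uX; apply: leM => //; rewrite in_fset_set.
- apply: (@aux_ereal R (\esum_(u in [set: G]) (mu u * (if u \in X then ln (1 + L u) else 0))%:E) _ t d).
  + by apply: esum_ge0 => u _; case: ifP; rewrite lee_fin ?mulr0 // mulr_ge0.
  + by apply: esum_ge0 => u _; case: ifP; rewrite lee_fin ?mulr0 // mulr_ge0.
  + rewrite -hT /T0 -esumD; last 2 first.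
    * by move=> u _; case: ifP; rewrite lee_fin ?mulr0 // mulr_ge0.
    * by move=> u _; case: ifP; rewrite lee_fin ?mulr0 // mulr_ge0.
    by apply: eq_esum => u _; case: ifP; rewrite ?mulr0 ?adde0 ?add0e.
  + apply: (lt_le_trans hX); apply: esum_ge; exists X => //.
    by apply: lee_fsum => // x xX; rewrite (mem_set xX).
Qed.
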